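(* Let $p$ and $q$ be primes with $q\equiv 1 \pmod p$. Let $N=C_q$ be a cyclic group of order $q$ and let $H=\langle x\rangle\times\langle y\rangle$ be an elementary abelian group of order $p^2$. Let $\langle x\rangle$ act faithfully on $N$ and let $\langle y\rangle$ act trivially on $N$, and let $G=N\rtimes H$ be the corresponding semidirect product. Let $U=N\langle x\rangle$ and $V=N\langle xy\rangle$. Then: (i) $U$ and $V$ are both subnormal in $G$, and $G=UV$; (ii) $O_p(G)=\langle y\rangle$ and $O_p(U)=O_p(V)=1$; in particular $O_p(G)\neq O_p(U)O_p(V)$.
   Context: For a finite group $X$ and prime $p$, $O_p(X)$ denotes the largest normal $p$-subgroup of $X$. *)

(* Defs.v *)
From mathcomp Require Import all_boot all_fingroup all_solvable.
Set Implicit Arguments.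
Unset Strict Implicit.
Unset Printing Implicit Defensive.

(* Main.v *)
Require Import Defs.
From mathcomp Require Import all_boot all_fingroup all_solvable.
From mathcomp Require Import zify.
Set Implicit Arguments.
Unset Strict Implicit.
Unset Printing Implicit Defensive.
Local Open Scope group_scope.

Lemma TI_cent (gT : finGroupType) (X K P : {group gT}) :
  K <| X -> P <| X -> K :&: P = 1 -> P \subset 'C(K).
Proof.
case/andP=> sKX nKX; case/andP=> sPX nPX tKP.
apply/commG1P/trivgP.
rewrite -tKP setIC; apply: commg_subI.
  by rewrite subsetI subxx (subset_trans sPX nKX).
by rewrite subsetI subxx (subset_trans sKX nPX).
Qed.

Lemma pcore_cent (gT : finGroupType) (p : nat) (X K : {group gT}) :
  K <| X -> p^'.-group K -> 'O_p(X) \subset 'C(K).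
Proof.
move=> nKX pK; apply: (TI_cent nKX (pcore_normal _ _)).
apply: coprime_TIg; rewrite coprime_sym; apply: (pnat_coprime (pcore_pgroup _ _)).
by [].
Qed.

Lemma pcore_NZ (gT : finGroupType) (p : nat) (G N : {group gT}) (z : gT) :
  N <| G -> z \in G -> abelian N -> p^'.-group N -> 'C_<[z]>(N) = 1 ->
  'O_p(N <*> <[z]>) = 1.
Proof.
move=> nNG zG aN pN cz.
have nzN : <[z]> \subset 'N(N).
  by rewrite cycle_subG; apply: (subsetP (normal_norm nNG)).
have nNY : N <| N <*> <[z]>.
  rewrite /normal joing_subl /= norm_joinEr // mul_subG ?normG //.
have cO := @pcore_cent _ p _ _ nNY pN.
have sON : 'O_p(N <*> <[z]>) \subset N.
  have : 'O_p(N <*> <[z]>) \subset (N * <[z]>) :&: 'C(N).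
    by rewrite subsetI cO -norm_joinEr // pcore_sub.
  by rewrite -group_modl // cz mulg1.
have : N :&: 'O_p(N <*> <[z]>) = 1.
  by rewrite coprime_TIg // coprime_sym (pnat_coprime (pcore_pgroup _ _)).
by move/setIidPr: sON => ->.
Qed.

Lemma ab_p (p a b : nat) : (1 < p)%N -> (a = 1%N \/ a = p) -> (b = 1%N \/ b = p) -> (a * b = p ^ 2)%N -> a = p /\ b = p.
Proof. move=> p1 [->|->] [->|->]; rewrite (expnS p 1) expn1; nia. Qed.

Theorem theorem3p3 (gT : finGroupType) (p q : nat) (G N H : {group gT}) (x y : gT) :
  prime p -> prime q -> q = 1 %[mod p] ->
  cyclic N -> #|N| = q ->
  <[x]> \x <[y]> = H -> p.-abelem H -> #|H| = (p ^ 2)%N ->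
  N ><| H = G ->
  'C_<[x]>(N) = 1 ->
  <[y]> \subset 'C(N) ->
  [/\ (N <*> <[x]>) <|<| G, (N <*> <[x * y]>) <|<| G
    & G :=: (N <*> <[x]>) * (N <*> <[x * y]>)] /\
  [/\ 'O_p(G) = <[y]>,
      'O_p(N <*> <[x]>) = 1,
      'O_p(N <*> <[x * y]>) = 1
    & 'O_p(G) != 'O_p(N <*> <[x]>) * 'O_p(N <*> <[x * y]>)].
Proof.
move=> pr_p pr_q qmod cN oN dH abH oH sdG cx cy.
have [_ defH cxy_ tixy] := dprodP dH.
have [_ defG nNH tiNH] := sdprodP sdG.
have sHG : H \subset G by rewrite -defG mulG_subr.
have sNG : N \subset G by rewrite -defG mulG_subl.
have nNG : N <| G by rewrite /normal sNG -defG mul_subG ?normG.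
have xH : x \in H by rewrite -cycle_subG -defH mulG_subl.
have yH : y \in H by rewrite -cycle_subG -defH mulG_subr.
have p1 := prime_gt1 pr_p.
have pq : q != p.
  apply/eqP => epq; move: qmod; rewrite epq modnn modn_small //.
have pN : p^'.-group N by rewrite /pgroup oN pnatE // !inE.
have aN : abelian N := cyclic_abelian cN.
have aH := abelem_abelian abH.
have o1p : forall z, z \in H -> #[z] = 1%N \/ #[z] = p.
  move=> z zH; case: (eqVneq z 1) => [->|nz]; first by left; rewrite order1.
  by right; apply: (abelem_order_p abH).
have [ox oy] : #[x] = p /\ #[y] = p.
  apply: ab_p p1 (o1p x xH) (o1p y yH) _.
  by rewrite !orderE (dprod_card dH) oH.
have nUG : forall z, z \in H -> N <*> <[z]> <| G.
  move=> z zH; rewrite /normal join_subG sNG cycle_subG (subsetP sHG) //=.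
  rewrite -defG; apply: mul_subG; first exact: subset_trans (joing_subl _ _) (normG _).
  rewrite normsY ?(subset_trans sHG (normal_norm nNG)) //.
  by apply: sub_abelian_norm; rewrite ?cycle_subG.
have xyH : x * y \in H by rewrite groupM.
have nU := nUG x xH; have nV := nUG _ xyH.
split.
  split; [exact: normal_subnormal | exact: normal_subnormal |].
  rewrite -comm_joingE; last first.
    by apply: normC; apply: subset_trans (normal_sub nU) (normal_norm nV).
  apply/eqP; rewrite eqEsubset join_subG (normal_sub nU) (normal_sub nV) /= -{1}defG -defH.
  have xJ : x \in (N <*> <[x]>) <*> (N <*> <[x * y]>).
    by apply: (subsetP (joing_subl _ _)); apply: (subsetP (joing_subr _ _)); apply: cycle_id.
  have xyJ : x * y \in (N <*> <[x]>) <*> (N <*> <[x * y]>).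
    by apply: (subsetP (joing_subr _ _)); apply: (subsetP (joing_subr _ _)); apply: cycle_id.
  rewrite andbT; apply: mul_subG.
    by apply: subset_trans (joing_subl _ _) (joing_subl _ _).
  apply: mul_subG; rewrite cycle_subG //.
  by have := groupM (groupVr xJ) xyJ; rewrite mulKg.
have OG : 'O_p(G) = <[y]>.
  apply/eqP; rewrite eqEsubset; apply/andP; split.
    have hall : p.-Hall(G) H.
      rewrite /pHall sHG (abelem_pgroup abH) /= -(divgS sHG) -(sdprod_card sdG).
      by rewrite oN mulnK // pnatE // !inE.
    have := pcore_sub_Hall hall; have := pcore_cent nNG pN.
    move=> c1 c2; have : 'O_p(G) \subset 'C(N) :&: H by rewrite subsetI c1 c2.
    by rewrite -defH -group_modr // setIC cx mul1g.
  apply: pcore_max.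
    by apply: pgroupS (abelem_pgroup abH); rewrite cycle_subG.
  rewrite /normal cycle_subG (subsetP sHG) //= -defG; apply: mul_subG.
    by apply: cents_norm; rewrite centsC.
  by apply: sub_abelian_norm; rewrite ?cycle_subG.
have cxy : 'C_<[x * y]>(N) = 1.
  apply/trivgP/subsetP => z /setIP [/cycleP [k ->] czN].
  have cmxy : commute x y by apply: esym; exact: (centsP cxy_ y (cycle_id y) x (cycle_id x)).
  move: czN; rewrite expgMn // => czN.
  have yk : y ^+ k \in 'C(N) by apply: (subsetP cy); apply: mem_cycle.
  have xk : x ^+ k \in 'C(N).
    by rewrite -(mulgK (y ^+ k) (x ^+ k)) groupM ?groupV.
  have : x ^+ k \in 'C_<[x]>(N) by rewrite inE mem_cycle.
  rewrite cx inE -order_dvdn ox => dk.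
  move: (dk); rewrite -oy order_dvdn => /eqP ->.
  by move: (dk); rewrite -ox order_dvdn => /eqP ->; rewrite mulg1 inE.
split=> //.
- exact: pcore_NZ nNG (subsetP sHG _ xH) aN pN cx.
- exact: pcore_NZ nNG (subsetP sHG _ xyH) aN pN cxy.
rewrite OG (pcore_NZ nNG (subsetP sHG _ xH) aN pN cx).
rewrite (pcore_NZ nNG (subsetP sHG _ xyH) aN pN cxy) mulg1.
by rewrite -cardG_gt1 -orderE oy.
Qed.
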